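(* Let $N\ge 2$, let $D^N_1,\ldots,D^N_N$ satisfy (A1)–(A3) below, let lower-level demands $D^n_i$ be defined by the consistency recursion below and satisfy (A4), and let costs satisfy $0\le s_1\le s_2\le\cdots\le s_N$. Fix $n\in\{1,\ldots,N-1\}$ and prices $p_1,\ldots,p_{n-1}\ge 0$. If $D^n_n(p_1,\ldots,p_{n-1},s_n)\le 0$, then $D^{n+1}_{n+1}(p_1,\ldots,p_{n-1},s_n,s_{n+1})\le 0$.
   Context: (A1) Each $D_i^N:\mathbb{R}_+^N\to\mathbb{R}$ is smooth, $D_N^N(0,\ldots,0)>0$, $\partial D_i^N/\partial p_i<0$, $\partial D_i^N/\partial p_j>0$ for $j\ne i$. (A2) Exchangeability: $D_i^N(p_1,\ldots,p_i,\ldots,p_j,\ldots,p_N)=D_j^N(p_1,\ldots,p_j,\ldots,p_i,\ldots,p_N)$ for all $i,j$ (entries $i,j$ swapped). (A3) For every $i$ and every vector of other prices there is a finite choke price at which $D_i^N=0$. Consistency recursion: for $n=N-1,\ldots,1$, $D_i^n(p_1,\ldots,p_n)=D_i^{n+1}(p_1,\ldots,p_n,\hat p_{n+1})$ for $i\le n$, where $\hat p_{n+1}(p_1,\ldots,p_n)$ is the unique price with $D^{n+1}_{n+1}(p_1,\ldots,p_n,\hat p_{n+1})=0$. (A4) $\partial D^n_i/\partial p_i<0$ for all $n\le N-1$, $i\le n$. *)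

(* Defs.v *)
From HB Require Import structures.
From mathcomp Require Import all_boot all_order all_algebra.
From mathcomp Require Import all_classical all_reals all_analysis.
Set Implicit Arguments. Unset Strict Implicit. Unset Printing Implicit Defensive.
Import Order.TTheory GRing.Theory Num.Theory.
Import numFieldNormedType.Exports.
Local Open Scope classical_set_scope.
Local Open Scope ring_scope.

Section Defs.
Variable R : realType.

(* price vectors of an n-firm market: row vectors; entry j is the price of firm j+1 *)
Definition nonneg n (p : 'rV[R]_n) : Prop := forall j : 'I_n, 0 <= p 0 j.

Definition ext n (p : 'rV[R]_n) (q : R) : 'rV[R]_n.+1 :=
  \row_(j < n.+1) (if unlift ord_max j is Some k then p 0 k else q).

Definition upd n (p : 'rV[R]_n) (i : 'I_n) (c : R) : 'rV[R]_n :=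
  \row_(j < n) (if j == i then c else p 0 j).

(* partial derivative w.r.t. p_i, for a function defined on the closed
   orthant R_+^n (one-sided at the boundary p_i = 0) *)
Definition has_pderiv n (f : 'rV[R]_n -> R) (p : 'rV[R]_n) (i : 'I_n) (d : R)
  : Prop :=
  (fun h : R => h^-1 * (f (upd p i (p 0 i + h)) - f p))
     @ within [set h : R | 0 <= p 0 i + h] (dnbhs (0 : R)) --> d.

Fixpoint iter_dir n (vs : seq 'rV[R]_n) (f : 'rV[R]_n -> R) : 'rV[R]_n -> R :=
  if vs is v :: vs' then 'D_v (iter_dir vs' f) else f.

Definition smooth n (f : 'rV[R]_n -> R) : Prop :=
  forall vs : seq 'rV[R]_n,
    continuous (iter_dir vs f) /\
    forall (v x : 'rV[R]_n), derivable (iter_dir vs f) x v.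

End Defs.

(* Main.v *)
Require Import Defs.
From HB Require Import structures.
From mathcomp Require Import all_boot all_order all_algebra all_fingroup.
From mathcomp Require Import all_classical all_reals all_analysis.
From mathcomp Require Import lra.
Import Order.TTheory GRing.Theory Num.Theory.
Import numFieldNormedType.Exports.
Local Open Scope classical_set_scope.
Local Open Scope ring_scope.


Section An0.
Context {R : realType}.

Lemma eps_of (f : R -> R) (t d : R) :
  (fun h : R => h^-1 * (f (t + h) - f t)) @ within [set h : R | 0 <= t + h] (dnbhs (0 : R)) --> d ->
  forall e, 0 < e -> exists2 del, 0 < del & forall h, `|h| < del -> h != 0 -> 0 <= t + h ->
    `|d - h^-1 * (f (t + h) - f t)| < e.
Proof.
move=> /cvgrPdist_lt H e he; have := H e he.
rewrite near_withinE /dnbhs near_withinE => /nbhs_normP [del del0 Hd].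
exists del => // h hd h0 th; apply: Hd => //=.
by rewrite sub0r normrN.
Qed.
End An0.


Section An1.
Context {R : realType}.

Lemma cont_of (f : R -> R) (t d : R) : 0 <= t ->
  (fun h : R => h^-1 * (f (t + h) - f t)) @ within [set h : R | 0 <= t + h] (dnbhs (0 : R)) --> d ->
  forall e, 0 < e -> exists2 del, 0 < del & forall y, 0 <= y -> `|t - y| < del ->
    `|f t - f y| < e.
Proof.
move=> t0 /eps_of H e he.
have [d1 d10 Hd1] := H 1 ltr01.
have M0 : 0 < `|d| + 1 by rewrite ltr_wpDl.
exists (Num.min d1 (e / (`|d| + 1))).
  by rewrite lt_min d10 divr_gt0.
move=> y y0; rewrite lt_min => /andP[yd1 ye].
have [->|ne] := eqVneq y t; first by rewrite subrr normr0.
set h := y - t.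
have hn : h != 0 by rewrite subr_eq0.
have th : t + h = y by rewrite /h addrC subrK.
have := Hd1 h; rewrite th => /(_ _ hn y0).
have -> : `|h| = `|t - y| by rewrite /h -normrN opprB.
move=> /(_ yd1) Hq.
set q := h^-1 * (f y - f t) in Hq.
have fq : f t - f y = - (h * q) by rewrite /q mulrA divff // mul1r opprB.
rewrite fq normrN normrM.
have qM : `|q| < `|d| + 1.
  have : `|q| <= `|d| + `|d - q|.
    have e1 : q = d - (d - q) by rewrite opprB addrCA subrr addr0.
    by rewrite [X in `|X| <= _]e1 ler_normB.
  move=> hq; apply: (le_lt_trans hq); by rewrite ltrD2l.
have hpos : 0 < `|h| by rewrite normr_gt0.
have -> : `|h| = `|t - y| by rewrite /h -normrN opprB.
apply: (le_lt_trans (y := `|t - y| * (`|d| + 1))).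
  by rewrite ler_wpM2l // ltW.
by rewrite -ltr_pdivlMr.
Qed.
End An1.


Section An2.
Context {R : realType}.

Lemma decr (f : R -> R) :
 (forall t : R, 0 <= t -> exists d : R, d < 0 /\
   (fun h : R => h^-1 * (f (t + h) - f t)) @ within [set h : R | 0 <= t + h] (dnbhs (0 : R)) --> d) ->
 forall a b, 0 <= a -> a < b -> f b < f a.
Proof.
move=> H a b a0 ab.
have b0 : 0 < b by apply: le_lt_trans ab.
have der x : 0 < x -> derivable f x 1 /\ 'D_1 f x < 0.
  move=> x0; have [d [dn Hd]] := H x (ltW x0).
  have Hc : (fun h : R => h^-1 *: (f (h *: 1 + x) - f x)) @ 0^' --> d.
    apply/cvgrPdist_lt => e e0.
    have [del del0 Hdel] := @eps_of _ _ _ _ Hd e e0.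
    rewrite /dnbhs near_withinE; apply/nbhs_normP.
    exists (Num.min del x); first by rewrite /= lt_min del0.
    move=> h /=; rewrite sub0r normrN lt_min => /andP[hd hx] hn.
    have -> : h *: (1:R) + x = x + h by rewrite /GRing.scale /= mulr1 addrC.
    apply: Hdel => //.
    have : - h <= `|h| by rewrite -normrN ler_norm.
    move=> hh; have := le_lt_trans hh hx; lra.
  split; first by apply/cvg_ex; exists d.
  by rewrite /derive (cvg_lim _ Hc).
have cont t : 0 <= t -> forall e, 0 < e -> exists2 del, 0 < del &
    forall y, 0 <= y -> `|t - y| < del -> `|f t - f y| < e.
  move=> t0; have [d [_ Hd]] := H t t0; exact: (@cont_of _ _ _ _ t0 Hd).
have LR : derivable_oo_LRcontinuous f a b.
  split.
  - move=> x; rewrite in_itv /= => /andP[ax _].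
    by have [] := der x (le_lt_trans a0 ax).
  - apply/cvgrPdist_lt => e e0.
    have [del del0 Hdel] := cont a a0 e e0.
    rewrite /at_right near_withinE; apply/nbhs_normP.
    exists del => // y /= ay1 ay2.
    by apply: Hdel => //; apply: ltW (le_lt_trans a0 ay2).
  - apply/cvgrPdist_lt => e e0.
    have [del del0 Hdel] := cont b (ltW b0) e e0.
    rewrite /at_left near_withinE; apply/nbhs_normP.
    exists (Num.min del b); first by rewrite /= lt_min del0.
    move=> y /=; rewrite lt_min => /andP[y1 y2] yb.
    apply: Hdel => //.
    have : b - y <= `|b - y| by rewrite ler_norm.
    lra.
have dpos x : x \in `]a, b[ -> 0 < x.
  by rewrite in_itv /= => /andP[ax _]; apply: le_lt_trans ax.
have [c cab E] := MVT ab (fun x xab => derivableP (proj1 (der x (dpos x xab))))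
  (derivable_oo_LRcontinuous_within LR).
have := proj2 (der c (dpos c cab)).
move: E; set D := 'D_1 f c => E Dn.
have : D * (b - a) < 0 by rewrite pmulr_llt0 // subr_gt0.
lra.
Qed.
End An2.


Section Mat.
Context {R : realType}.
Implicit Types (n : nat).

Lemma liftw n (i : 'I_n) : lift ord_max i = widen_ord (leqnSn n) i.
Proof. by apply: val_inj; exact: lift_max. Qed.

Lemma w_neq n (i : 'I_n) : widen_ord (leqnSn n) i != ord_max.
Proof. by rewrite -liftw eq_sym neq_lift. Qed.

Lemma w_inj n (i j : 'I_n) : (widen_ord (leqnSn n) i == widen_ord (leqnSn n) j) = (i == j).
Proof. by rewrite -!liftw (inj_eq (@lift_inj _ _)). Qed.

Lemma ext_w n (p : 'rV[R]_n) q i : ext p q 0 (widen_ord (leqnSn n) i) = p 0 i.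
Proof. by rewrite /ext mxE -liftw liftK. Qed.

Lemma ext_max n (p : 'rV[R]_n) q : ext p q 0 ord_max = q.
Proof. by rewrite /ext mxE unlift_none. Qed.

Lemma upd_at n (p : 'rV[R]_n) i c : upd p i c 0 i = c.
Proof. by rewrite /upd mxE eqxx. Qed.

Lemma upd_ne n (p : 'rV[R]_n) i j c : j != i -> upd p i c 0 j = p 0 j.
Proof. by rewrite /upd mxE => /negbTE ->. Qed.

Lemma xcolE0 n (p : 'rV[R]_n) a b k : xcol a b p 0 k = p 0 (tperm a b k).
Proof. by rewrite /xcol /col_perm mxE. Qed.

Lemma rowP0 n (p q : 'rV[R]_n) : (forall k, p 0 k = q 0 k) -> p = q.
Proof. by move=> H; apply/rowP => k; apply: H. Qed.

Lemma ext_case n (P : 'I_n.+1 -> Prop) :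
  (forall i, P (widen_ord (leqnSn n) i)) -> P ord_max -> forall k, P k.
Proof.
move=> Hw Hm k; case: (unliftP ord_max k) => [j ->|->] //.
by rewrite liftw.
Qed.

Lemma upd_upd n (p : 'rV[R]_n) i a b : upd (upd p i a) i b = upd p i b.
Proof.
apply: rowP0 => k; have [->|ne] := eqVneq k i; first by rewrite !upd_at.
by rewrite !upd_ne.
Qed.

Lemma upd_id n (p : 'rV[R]_n) i : upd p i (p 0 i) = p.
Proof.
apply: rowP0 => k; have [->|ne] := eqVneq k i; first by rewrite !upd_at.
by rewrite !upd_ne.
Qed.

Lemma ext_upd n (p : 'rV[R]_n) j c q :
  ext (upd p j c) q = upd (ext p q) (widen_ord (leqnSn n) j) c.
Proof.
apply: rowP0; apply: ext_case => [i|].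
  rewrite ext_w; have [->|ne] := eqVneq i j; first by rewrite !upd_at.
  by rewrite !upd_ne ?ext_w // w_inj.
by rewrite upd_ne ?ext_max // eq_sym w_neq.
Qed.

Lemma upd_ext_max n (p : 'rV[R]_n) q q' : upd (ext p q) ord_max q' = ext p q'.
Proof.
apply: rowP0; apply: ext_case => [i|]; last by rewrite upd_at ext_max.
by rewrite upd_ne ?ext_w // w_neq.
Qed.

Lemma ext_xcol n (p : 'rV[R]_n) i j q :
  ext (xcol i j p) q = xcol (widen_ord (leqnSn n) i) (widen_ord (leqnSn n) j) (ext p q).
Proof.
apply: rowP0; apply: ext_case => [k|].
  rewrite ext_w !xcolE0.
  have [->|ne1] := eqVneq k i; first by rewrite !tpermL ext_w.
  have [->|ne2] := eqVneq k j; first by rewrite !tpermR ext_w.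
  by rewrite !tpermD ?ext_w // ?w_inj // eq_sym.
by rewrite xcolE0 tpermD ?ext_max // w_neq.
Qed.

Lemma xcol_upd n (p : 'rV[R]_n) a b : a != b ->
  xcol a b p = upd (upd p a (p 0 b)) b (p 0 a).
Proof.
move=> ab; apply: rowP0 => k; rewrite xcolE0.
have [->|ne2] := eqVneq k b; first by rewrite tpermR upd_at.
rewrite upd_ne //.
have [->|ne1] := eqVneq k a; first by rewrite tpermL upd_at.
by rewrite upd_ne // tpermD // eq_sym.
Qed.

Lemma xcol3 n (p : 'rV[R]_n) i j l : l != i -> l != j -> i != j ->
  xcol j l (xcol i j (xcol l i p)) = xcol i j p.
Proof.
move=> li lj ij; apply: rowP0 => k; rewrite !xcolE0.
have [->|k1] := eqVneq k i.
  have ji : j != i by rewrite eq_sym.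
  by rewrite (tpermD ji li) tpermL tpermD // eq_sym.
have [->|k2] := eqVneq k j.
  rewrite tpermL (tpermD (x:=i) (y:=j) (z:=l)) 1?eq_sym // tpermL.
  by rewrite tpermR.
have [->|k3] := eqVneq k l.
  rewrite tpermR tpermR tpermR.
  by rewrite (tpermD (x:=i) (y:=j) (z:=l)) 1?eq_sym.
rewrite (tpermD (x:=j) (y:=l) (z:=k)) 1?eq_sym //.
rewrite (tpermD (x:=i) (y:=j) (z:=k)) 1?eq_sym //.
by rewrite (tpermD (x:=l) (y:=i) (z:=k)) 1?eq_sym.
Qed.

Lemma xcol_id n (p : 'rV[R]_n) i : xcol i i p = p.
Proof.
apply: rowP0 => k; rewrite xcolE0; have [->|ne] := eqVneq k i; first by rewrite tpermL.
by rewrite tpermD // eq_sym.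
Qed.

Lemma nonneg_upd n (p : 'rV[R]_n) j c : nonneg p -> 0 <= c -> nonneg (upd p j c).
Proof. by move=> Hp c0 k; rewrite /upd mxE; case: ifP. Qed.

Lemma nonneg_ext n (p : 'rV[R]_n) q : nonneg p -> 0 <= q -> nonneg (ext p q).
Proof. by move=> Hp q0 k; rewrite /ext mxE; case: unlift. Qed.

Lemma nonneg_xcol n (p : 'rV[R]_n) a b : nonneg p -> nonneg (xcol a b p).
Proof. by move=> Hp k; rewrite xcolE0. Qed.

End Mat.
Arguments nonneg_xcol {R n p} a b _.
Arguments nonneg_upd {R n p} j {c} _ _.
Arguments nonneg_ext {R n p q} _ _.


Section P.
Variable R : realType.

Lemma pmono n (F : 'rV[R]_n -> R) j :
  (forall p, nonneg p -> exists d, has_pderiv F p j d /\ d < 0) ->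
  forall p t1 t2, nonneg p -> 0 <= t1 -> t1 < t2 -> F (upd p j t2) < F (upd p j t1).
Proof.
move=> H p t1 t2 p0 t10 t12.
apply: (@decr _ (fun t => F (upd p j t))) => // t t0.
have [d [Hd dn]] := H _ (nonneg_upd j p0 t0).
exists d; split => //.
move: Hd; rewrite /has_pderiv upd_at.
by under eq_fun do rewrite upd_upd.
Qed.

Lemma pmonoI n (F : 'rV[R]_n -> R) j :
  (forall p, nonneg p -> exists d, has_pderiv F p j d /\ 0 < d) ->
  forall p t1 t2, nonneg p -> 0 <= t1 -> t1 < t2 -> F (upd p j t1) < F (upd p j t2).
Proof.
move=> H p t1 t2 p0 t10 t12.
rewrite -ltrN2; apply: (@pmono n (fun q => - F q) j) => // q q0.
have [d [Hd dn]] := H _ q0.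
exists (- d); split; last by rewrite oppr_lt0.
move: Hd; rewrite /has_pderiv => /cvgN.
apply: cvg_trans; apply: near_eq_cvg; apply: nearW => h /=.
by rewrite -opprD mulrN.
Qed.
End P.


Section S.
Context {R : realType}.
Variable D : forall n : nat, 'rV[R]_n -> 'I_n -> R.

Definition Exch k := forall (p : 'rV[R]_k) (i j : 'I_k), nonneg p -> D k p i = D k (xcol i j p) j.
Definition Cross k := forall (p : 'rV[R]_k) (i j : 'I_k) c, nonneg p -> i != j -> p 0 j <= c ->
  D k p i <= D k (upd p j c) i.
Definition Own k := forall (p : 'rV[R]_k) (i : 'I_k) t1 t2, nonneg p -> 0 <= t1 -> t1 < t2 ->
  D k (upd p i t2) i < D k (upd p i t1) i.
Definition Rec k := forall p : 'rV[R]_k, nonneg p ->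
     exists q : R, [/\ 0 <= q, D k.+1 (ext p q) ord_max = 0,
       (forall q' : R, 0 <= q' -> D k.+1 (ext p q') ord_max = 0 -> q' = q) &
       forall i : 'I_k, D k p i = D k.+1 (ext p q) (widen_ord (leqnSn k) i)].

Lemma own_weak k : Own k -> forall (p : 'rV[R]_k) i t1 t2, nonneg p -> 0 <= t1 -> t1 <= t2 ->
  D k (upd p i t2) i <= D k (upd p i t1) i.
Proof.
move=> H p i t1 t2 p0 t10; rewrite le_eqVlt => /predU1P[->//|lt].
exact/ltW/H.
Qed.

Lemma exch_other k : Exch k -> forall (p : 'rV[R]_k) i j l, nonneg p -> l != i -> l != j ->
  D k p l = D k (xcol i j p) l.
Proof.
move=> H p i j l p0 li lj.
have [<-|ij] := eqVneq i j; first by rewrite xcol_id.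
rewrite (H p l i p0) (H _ i j (nonneg_xcol _ _ p0)) (H _ j l (nonneg_xcol _ _ (nonneg_xcol _ _ p0))).
by rewrite xcol3.
Qed.

Lemma step k : Rec k -> Exch k.+1 -> Cross k.+1 -> Own k.+1 -> Exch k /\ Cross k.
Proof.
move=> Hr He Hc Ho; split.
- move=> p i j p0.
  have [q [q0 qz qu qD]] := Hr p p0.
  have xp0 := nonneg_xcol i j p0.
  have [q' [q'0 q'z q'u q'D]] := Hr _ xp0.
  have Eqq : q = q'.
    apply: q'u => //.
    rewrite ext_xcol -(@exch_other _ He); first exact: qz.
    - exact: nonneg_ext p0 q0.
    - by rewrite eq_sym w_neq.
    - by rewrite eq_sym w_neq.
  rewrite -Eqq in q'D.
  rewrite q'D qD ext_xcol -He //; exact: nonneg_ext p0 q0.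
- move=> p i j c p0 ij pc.
  have c0 : 0 <= c by apply: le_trans pc.
  have p'0 := nonneg_upd j p0 c0.
  have [q [q0 qz qu qD]] := Hr p p0.
  have [q' [q'0 q'z q'u q'D]] := Hr _ p'0.
  have wij : widen_ord (leqnSn k) i != widen_ord (leqnSn k) j by rewrite w_inj.
  have A1 : D k.+1 (ext p q) ord_max <= D k.+1 (ext (upd p j c) q) ord_max.
    rewrite ext_upd; apply: Hc; first exact: nonneg_ext p0 q0.
      by rewrite eq_sym w_neq.
    by rewrite ext_w.
  have qq : q <= q'.
    rewrite leNgt; apply/negP => lt.
    have := Ho (ext (upd p j c) q') ord_max q' q (nonneg_ext p'0 q'0) q'0 lt.
    rewrite !upd_ext_max; lra.
  rewrite qD q'D.
  apply: (le_trans (y := D k.+1 (ext (upd p j c) q) (widen_ord (leqnSn k) i))).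
    rewrite ext_upd; apply: Hc => //; first exact: nonneg_ext p0 q0.
    by rewrite ext_w.
  rewrite -(@upd_ext_max _ _ (upd p j c) q q').
  apply: Hc; first exact: nonneg_ext p'0 q0.
    exact: w_neq.
  by rewrite ext_max.
Qed.
End S.


Theorem lemma2p1 (R : realType) (N : nat)
  (D : forall n : nat, 'rV[R]_n -> 'I_n -> R) (s : nat -> R) :
  (2 <= N)%N ->
  (* (A1) *)
  (forall i : 'I_N, smooth (fun p => D N p i)) ->
  (forall i : 'I_N, i = N.-1 :> nat -> 0 < D N 0 i) ->
  (forall (p : 'rV[R]_N) (i : 'I_N), nonneg p ->
     exists d, has_pderiv (fun q => D N q i) p i d /\ d < 0) ->
  (forall (p : 'rV[R]_N) (i j : 'I_N), nonneg p -> i != j ->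
     exists d, has_pderiv (fun q => D N q i) p j d /\ 0 < d) ->
  (* (A2) exchangeability *)
  (forall (p : 'rV[R]_N) (i j : 'I_N), nonneg p ->
     D N p i = D N (xcol i j p) j) ->
  (* (A3) finite choke price *)
  (forall (p : 'rV[R]_N) (i : 'I_N), nonneg p ->
     exists c : R, 0 <= c /\ D N (upd p i c) i = 0) ->
  (* consistency recursion, n = N-1, ..., 1 *)
  (forall n : nat, (0 < n)%N -> (n < N)%N -> forall p : 'rV[R]_n, nonneg p ->
     exists q : R, [/\ 0 <= q, D n.+1 (ext p q) ord_max = 0,
       (forall q' : R, 0 <= q' -> D n.+1 (ext p q') ord_max = 0 -> q' = q) &
       forall i : 'I_n, D n p i = D n.+1 (ext p q) (widen_ord (leqnSn n) i)]) ->
  (* (A4) *)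
  (forall n : nat, (0 < n)%N -> (n < N)%N -> forall (p : 'rV[R]_n) (i : 'I_n),
     nonneg p -> exists d, has_pderiv (fun q => D n q i) p i d /\ d < 0) ->
  (* costs 0 <= s_1 <= ... <= s_N *)
  0 <= s 1%N ->
  (forall k : nat, (1 <= k)%N -> (k < N)%N -> s k <= s k.+1) ->
  (* n = m+1 in {1,...,N-1}, prices (p_1,...,p_{n-1}) = p *)
  forall (m : nat) (p : 'rV[R]_m), (m.+2 <= N)%N -> nonneg p ->
    D m.+1 (ext p (s m.+1)) ord_max <= 0 ->
    D m.+2 (ext (ext p (s m.+1)) (s m.+2)) ord_max <= 0.
Proof.
move=> N2 _ _ hown hcross hexch _ hrec hA4 s1 smono m p mN p0 hD.
have ownN : Own D N.
  move=> q i t1 t2 q0 t10 lt.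
  exact: (@pmono _ _ (fun r => D N r i) i (fun r r0 => hown r i r0) q t1 t2 q0 t10 lt).
have own_all k : (0 < k)%N -> (k <= N)%N -> Own D k.
  move=> k0; rewrite leq_eqVlt => /orP[/eqP->//|kN].
  move=> q i t1 t2 q0 t10 lt.
  exact: (@pmono _ _ (fun r => D k r i) i (fun r r0 => hA4 k k0 kN r i r0) q t1 t2 q0 t10 lt).
have crossN : Cross D N.
  move=> q i j c q0 ij qc.
  have [<-|ne] := eqVneq (q 0 j) c; first by rewrite upd_id.
  have lt : q 0 j < c by rewrite lt_neqAle ne qc.
  rewrite -{1}(@upd_id _ _ q j); apply: ltW.
  exact: (@pmonoI _ _ (fun r => D N r i) j (fun r r0 => hcross r i j r0 ij) q _ _ q0 (q0 j) lt).
have ind r : forall k, (k + r)%N = N -> (m.+2 <= k)%N -> Exch D k /\ Cross D k.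
  elim: r => [|r IH] k.
    by rewrite addn0 => -> _; split.
  move=> kr mk.
  have [He Hc] : Exch D k.+1 /\ Cross D k.+1.
    by apply: IH; [rewrite addSnnS | exact: leqW].
  apply: step => //.
  - move=> q q0; apply: hrec => //.
      by apply: leq_trans mk.
    by rewrite -kr -addn1 leq_add2l.
  - apply: own_all => //; by rewrite -kr -addn1 leq_add2l.
have [He Hc] := ind (N - m.+2)%N m.+2 (subnKC mN) (leqnn _).
have Ho := own_all m.+2 isT mN.
have spos k : (1 <= k)%N -> (k <= N)%N -> 0 <= s k.
  elim: k => [//|k IH] k1 kN.
  case: k IH k1 kN => [_ _ _|k IH _ kN]; first exact: s1.
  apply: le_trans (smono k.+1 isT kN).
  by apply: IH => //; apply: ltnW.
have sm0 : 0 <= s m.+1 := spos m.+1 isT (ltnW mN).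
set P := ext p (s m.+1) in hD *.
have P0 : nonneg P := nonneg_ext p0 sm0.
have [q [q0 qz qu qD]] := hrec m.+1 isT mN P P0.
have qs : q <= s m.+1.
  rewrite leNgt; apply/negP => lt.
  set X := ext P q.
  have X0 : nonneg X := nonneg_ext P0 q0.
  set a := widen_ord (leqnSn m.+1) ord_max.
  have Xa : X 0 a = s m.+1 by rewrite /X /a ext_w /P ext_max.
  have Xb : X 0 ord_max = q by rewrite /X ext_max.
  have ab : a != ord_max by exact: w_neq.
  set Z := upd X a q.
  have Z0 : nonneg Z := nonneg_upd a X0 q0.
  have c1 : D m.+2 X ord_max <= D m.+2 Z ord_max.
    apply: Hc => //; first by rewrite eq_sym.
    by rewrite Xa ltW.
  have Zb : Z 0 ord_max = q by rewrite /Z upd_ne 1?eq_sym.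
  have c2 : D m.+2 (upd Z ord_max q) ord_max < D m.+2 (upd Z ord_max (s m.+1)) ord_max.
    exact: Ho.
  have e1 : upd Z ord_max q = Z by rewrite -Zb upd_id.
  have e2 : upd Z ord_max (s m.+1) = xcol a ord_max X by rewrite xcol_upd // Xa Xb.
  rewrite e1 e2 -He // -qD in c2.
  move: qz; rewrite -/X => qz.
  lra.
have -> : ext P (s m.+2) = upd (ext P q) ord_max (s m.+2) by rewrite upd_ext_max.
have sq : q <= s m.+2 by apply: le_trans qs (smono m.+1 isT mN).
apply: le_trans (@own_weak _ D m.+2 Ho (ext P q) ord_max q (s m.+2) (nonneg_ext P0 q0) q0 sq) _.
by rewrite upd_ext_max qz.
Qed.
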